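(* Let $p$ be an odd prime and $\sim$ an equivalence relation on $\mathbb{Z}_p^\times$ such that $x \sim y$ and $x \neq y$ together imply $(-x) \sim (y-x)$. Let $S_1$ and $S_2$ each be obtained by adjoining $0$ to some equivalence class of $\sim$. Then either $S_1, S_2$ form a distinct difference system, or there exist $a \in S_1$ and $b \in S_2$ such that $\{x - a \mid x \in S_1\} = \{y - b \mid y \in S_2\}$.
   Context: Subsets $S_1,\ldots,S_k$ of an abelian group $A$ form a distinct difference system if: (i) for any $i,j$ and any $x,y \in S_i$, $z,w \in S_j$ with $x \neq y$ and $z \neq w$, the equation $x-y=z-w$ implies $x=z$ and $y=w$; (ii) each $S_i$ contains $0$ and at least one other element; (iii) $S_i \cap S_j = \{0\}$ for $i \neq j$. *)

(* Defs.v *)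
From HB Require Import structures.
From mathcomp Require Import all_boot all_order all_algebra all_fingroup.
Set Implicit Arguments. Unset Strict Implicit. Unset Printing Implicit Defensive.
Import GRing.Theory.
Local Open Scope ring_scope.

Definition distinct_difference_system (A : finZmodType) (k : nat)
    (S : 'I_k -> {set A}) : Prop :=
  [/\ (forall (i j : 'I_k) (x y z w : A),
          x \in S i -> y \in S i -> z \in S j -> w \in S j ->
          x != y -> z != w -> x - y = z - w -> x = z /\ y = w),
      (forall i : 'I_k, 0 \in S i /\ exists2 x, x \in S i & x != 0) &
      (forall i j : 'I_k, i != j -> S i :&: S j = [set 0])].

Definition equiv_on_nonzero (T : zmodType) (r : rel T) : Prop :=
  [/\ (forall x, x != 0 -> r x x),
      (forall x y, x != 0 -> y != 0 -> r x y -> r y x) &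
      (forall x y z, x != 0 -> y != 0 -> z != 0 -> r x y -> r y z -> r x z)].

Definition nz_class (T : finZmodType) (r : rel T) (u : T) : {set T} :=
  [set x | (x != 0) && r u x].

(* Main.v *)
Require Import Defs.
From HB Require Import structures.
From mathcomp Require Import all_boot all_order all_algebra all_fingroup.
From Stdlib Require Import Classical.
From mathcomp Require Import ring.
Import GRing.Theory.
Local Open Scope ring_scope.
Set Implicit Arguments. Unset Strict Implicit.

Lemma Fp_muln (p : nat) (t c : 'F_p) : prime p -> c != 0 -> exists n : nat, t = c *+ n.
Proof.
move=> pp c0; exists (nat_of_ord (t / c)).
rewrite -mulr_natl (natr_Zp (t / c)) divfK //.
Qed.

Definition Sc (T : finZmodType) (r : rel T) (u : T) := 0 |: nz_class r u.

Lemma classB (T : finZmodType) (r : rel T) u v : equiv_on_nonzero r -> u != 0 ->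
  v \in nz_class r u -> nz_class r u = nz_class r v.
Proof.
case=> Rf Sy Tr u0; rewrite inE => /andP[v0 huv].
apply/setP => x; rewrite !inE; case: (eqVneq x 0) => //= x0.
apply/idP/idP => h.
  exact: (Tr _ _ _ v0 u0 x0 (Sy _ _ u0 v0 huv) h).
exact: (Tr _ _ _ u0 v0 x0 huv h).
Qed.

Lemma ScB (T : finZmodType) (r : rel T) v d : equiv_on_nonzero r -> v != 0 -> d != 0 ->
  d \in Sc r v -> Sc r v = Sc r d.
Proof.
move=> E v0 d0 hd; rewrite /Sc (classB (v:=d) E v0) //.
by move: hd; rewrite !inE (negbTE d0).
Qed.

Definition Hyp (T : finZmodType) (r : rel T) :=
  forall x y : T, x != 0 -> y != 0 -> r x y -> x != y -> r (- x) (y - x).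

Lemma transl_sub (T : finZmodType) (r : rel T) u y : equiv_on_nonzero r -> Hyp r ->
  u != 0 -> y \in Sc r u -> y != 0 -> [set x - y | x in Sc r u] \subset Sc r (- y).
Proof.
move=> E H u0 hy y0; have [Rf Sy Tr] := E.
have ny0 : - y != 0 by rewrite oppr_eq0.
have ruy : r u y by move: hy; rewrite !inE (negbTE y0) => /andP[].
apply/subsetP => _ /imsetP[x hx ->].
case: (eqVneq x 0) => [-> | x0].
  by rewrite sub0r !inE (negbTE ny0) /= Rf.
have rux : r u x by move: hx; rewrite !inE (negbTE x0) => /andP[].
case: (eqVneq x y) => [-> | xy]; first by rewrite subrr !inE eqxx.
rewrite !inE subr_eq0 (negbTE xy) /=.
apply: H => //; first exact: (Tr _ _ _ y0 u0 x0 (Sy _ _ u0 y0 ruy) rux).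
by rewrite eq_sym.
Qed.

Lemma translE (T : finZmodType) (r : rel T) u y : equiv_on_nonzero r -> Hyp r ->
  u != 0 -> y \in Sc r u -> y != 0 -> [set x - y | x in Sc r u] = Sc r (- y).
Proof.
move=> E H u0 hy y0; have [Rf Sy Tr] := E.
have ny0 : - y != 0 by rewrite oppr_eq0.
apply/eqP; rewrite eqEsubset transl_sub //=.
have h2 := transl_sub E H ny0 (y := - y).
rewrite opprK in h2.
have hny : - y \in Sc r (- y) by rewrite !inE (negbTE ny0) /= Rf.
have := h2 hny ny0; rewrite -(ScB E u0 y0 hy) => sub.
apply/subsetP => z hz; apply/imsetP; exists (z + y); last by rewrite addrK.
apply: (subsetP sub); apply/imsetP; exists z => //; by rewrite opprK.
Qed.

Lemma imset_sub0 (T : finZmodType) (A : {set T}) : [set x - 0 | x in A] = A.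
Proof.
apply/setP => z; apply/imsetP/idP => [[x hx ->] | hz]; first by rewrite subr0.
by exists z; rewrite ?subr0.
Qed.

Lemma transl_d (T : finZmodType) (r : rel T) u y d : equiv_on_nonzero r -> Hyp r ->
  u != 0 -> y \in Sc r u -> d != 0 -> d \in [set x - y | x in Sc r u] ->
  [set x - y | x in Sc r u] = Sc r d.
Proof.
move=> E H u0 hy d0.
case: (eqVneq y 0) => [-> | y0].
  by rewrite imset_sub0 => hd; apply: ScB.
rewrite translE // => hd; apply: ScB => //; by rewrite oppr_eq0.
Qed.

Lemma fullA (p : nat) (A : {set 'F_p}) y w : prime p -> 0 \in A -> y != w ->
  [set x - y | x in A] = [set x - w | x in A] -> A = setT.
Proof.
move=> pp A0 yw e.
have c0 : w - y != 0 by rewrite subr_eq0 eq_sym.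
have cl : forall x, x \in A -> x + (w - y) \in A.
  move=> x hx; have : x - y \in [set x - w | x in A] by rewrite -e; apply/imsetP; exists x.
  case/imsetP => x' hx' ex.
  move: ex => /= ex.
  suff -> : x + (w - y) = x' by [].
  by rewrite -[x'](subrK w) -ex; ring.
have cn : forall n, (w - y) *+ n \in A.
  by elim=> [|n IH]; rewrite ?mulr0n // mulrSr; apply: cl.
apply/setP => t; rewrite inE; have [n ->] := Fp_muln t pp c0; exact: cn.
Qed.

Lemma samecase (p : nat) (r : rel 'F_p) u u' y w : prime p -> equiv_on_nonzero r ->
  u != 0 -> u' != 0 -> y != w ->
  [set x - y | x in Sc r u] = [set x - w | x in Sc r u] -> nz_class r u = nz_class r u'.
Proof.
move=> pp E u0 u'0 yw e.
have A0 : (0 : 'F_p) \in Sc r u by rewrite !inE eqxx.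
have := fullA pp A0 yw e => hT.
apply: classB => //.
have : u' \in Sc r u by rewrite hT inE.
by rewrite !inE (negbTE u'0).
Qed.

Lemma keyT (T : finZmodType) (r : rel T) ua ub x y z w : equiv_on_nonzero r -> Hyp r ->
  ua != 0 -> ub != 0 -> x \in Sc r ua -> y \in Sc r ua -> z \in Sc r ub -> w \in Sc r ub ->
  x != y -> x - y = z - w ->
  [set x - y | x in Sc r ua] = [set x - w | x in Sc r ub].
Proof.
move=> E H a0 b0 hx hy hz hw xy e.
have d0 : x - y != 0 by rewrite subr_eq0.
rewrite (transl_d (d := x - y) E H a0 hy d0); last by apply/imsetP; exists x.
have hd : x - y \in [set x - w | x in Sc r ub] by rewrite e; apply/imsetP; exists z.
by rewrite (transl_d (d := x - y) E H b0 hw d0 hd).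
Qed.

Unset Implicit Arguments.
Theorem lemma3p27 (p : nat) (r : rel 'F_p) (u1 u2 : 'F_p) :
  prime p -> odd p ->
  equiv_on_nonzero r ->
  (forall x y : 'F_p, x != 0 -> y != 0 -> r x y -> x != y -> r (- x) (y - x)) ->
  u1 != 0 -> u2 != 0 ->
  let S1 := 0 |: nz_class r u1 in
  let S2 := 0 |: nz_class r u2 in
  distinct_difference_system (fun i : 'I_2 => tnth [tuple S1; S2] i)
  \/ exists a b : 'F_p, [/\ a \in S1, b \in S2 &
        [set x - a | x in S1] = [set y - b | y in S2]].
Proof.
move=> pp _ E H u10 u20 S1 S2.
case: (eqVneq (nz_class r u1) (nz_class r u2)) => [eqC | neC].
  by right; exists 0, 0; rewrite /S1 /S2 eqC !inE eqxx.
case: (classic (exists a b : 'F_p, [/\ a \in S1, b \in S2 &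
        [set x - a | x in S1] = [set y - b | y in S2]])) => [h|h]; first by right.
have [Rf Sy Tr] := E.
have hu1 : u1 \in S1 by rewrite !inE (negbTE u10) /= Rf.
have hu2 : u2 \in S2 by rewrite !inE (negbTE u20) /= Rf.
have inter : S1 :&: S2 = [set 0].
  apply/setP => x; rewrite !inE; case: (eqVneq x 0) => // x0.
  rewrite /=; apply/negbTE/andP => -[h1 h2]; apply: (negP neC); apply/eqP.
  have m1 : x \in nz_class r u1 by rewrite inE x0 h1.
  have m2 : x \in nz_class r u2 by rewrite inE x0 h2.
  by rewrite (classB E u10 m1) (classB E u20 m2).
left; split.
- move=> i j x y z w; case: i => [[|[|//]] ?]; case: j => [[|[|//]] ?];
    rewrite !(tnth_nth S1) /= => hx hy hz hw xy zw e.
  + case: (eqVneq y w) => [yw|yw].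
      by subst; split => //; move/addIr: e.
    exfalso; apply: (negP neC); apply/eqP; apply: (samecase pp E u10 u20 yw).
    exact: (keyT E H u10 u10 hx hy hz hw xy e).
  + exfalso; apply: h; exists y, w; split => //.
    exact: (keyT E H u10 u20 hx hy hz hw xy e).
  + exfalso; apply: h; exists w, y; split => //.
    exact: esym (keyT E H u20 u10 hx hy hz hw xy e).
  + case: (eqVneq y w) => [yw|yw].
      by subst; split => //; move/addIr: e.
    exfalso; apply: (negP neC); apply/eqP; apply: esym; apply: (samecase pp E u20 u10 yw).
    exact: (keyT E H u20 u20 hx hy hz hw xy e).
- move=> [[|[|//]] ?]; rewrite (tnth_nth S1) /=; split; rewrite ?inE ?eqxx //.
    by exists u1.
  by exists u2.
- move=> [[|[|//]] ?] [[|[|//]] ?] //= _; rewrite !(tnth_nth S1) /= //.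
  by rewrite setIC.
Qed.
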